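(* Let $T=\left[\begin{smallmatrix} R & M\\ N & S\end{smallmatrix}\right]$ and $T'=\left[\begin{smallmatrix} R' & M'\\ N' & S'\end{smallmatrix}\right]$ be Morita context rings such that $R'$ and $S'$ are indecomposable rings and at least one of $M'$, $N'$ is nonzero. Then: (1) $\mathrm{Iso}_0^0(T,T')$ equals the set of all semigraded isomorphisms from $T$ to $T'$; (2) $\mathrm{Iso}_0^1(T,T')$ equals the set of all anti-semigraded isomorphisms from $T$ to $T'$. In particular, $\mathrm{Iso}_g(T,T')\subseteq\mathrm{Iso}_0(T,T')$.
   Context: All rings have an identity $1\neq 0$; a ring is indecomposable if its only central idempotents are $0$ and $1$. A Morita context $(R,S,M,N,f,g)$: rings $R,S$, an $R$-$S$-bimodule $M$, an $S$-$R$-bimodule $N$, bimodule morphisms $f:M\otimes_SN\to R$, $g:N\otimes_RM\to S$, with $[m,n]=f(m\otimes n)$, $(n,m)=g(n\otimes m)$ satisfying $[m,n]m'=m(n,m')$ and $n[m,n']=(n,m)n'$. Its Morita context ring $T=\left[\begin{smallmatrix} R & M\\ N & S\end{smallmatrix}\right]$ consists of formal matrices with entrywise addition and product $\left[\begin{smallmatrix} r & m\\ n & s\end{smallmatrix}\right]\left[\begin{smallmatrix} r' & m'\\ n' & s'\end{smallmatrix}\right]=\left[\begin{smallmatrix} rr'+[m,n'] & rm'+ms'\\ nr'+sn' & (n,m')+ss'\end{smallmatrix}\right]$; similarly for $T'$ (pairings also written $[\,,],(\,,)$). Grading: $T_{-1}=\left[\begin{smallmatrix} 0 & 0\\ N &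 0\end{smallmatrix}\right]$, $T_0=\left[\begin{smallmatrix} R & 0\\ 0 & S\end{smallmatrix}\right]$, $T_1=\left[\begin{smallmatrix} 0 & M\\ 0 & 0\end{smallmatrix}\right]$, $T_i=0$ otherwise (same for $T'$). A ring isomorphism $\phi:T\to T'$ is graded if $\phi(T_i)\subseteq T'_i$ for all $i\in\mathbb Z$, anti-graded if $\phi(T_i)\subseteq T'_{-i}$ for all $i$; $\mathrm{Iso}_g(T,T')$ is the set of all graded and anti-graded isomorphisms. $\phi$ is semigraded if $\phi(T_i)\subseteq T'_i$ for $i\in\{-1,1\}$, and anti-semigraded if $\phi(T_i)\subseteq T'_{-i}$ for $i\in\{-1,1\}$. $\mathrm{Iso}_0(T,T')=\mathrm{Iso}_0^0(T,T')\cup\mathrm{Iso}_0^1(T,T')$, where $\mathrm{Iso}_0^0(T,T')$ is the set of maps $\phi\left(\left[\begin{smallmatrix} r & m\\ n & s\end{smallmatrix}\right]\right)=\left[\begin{smallmatrix}\gamma(r) & \gamma(r)m'_0-m'_0\delta(s)+u(m)\\ n'_0\gamma(r)-\delta(s)n'_0+v(n) & \delta(s)\end{smallmatrix}\right]$ with $\gamma:R\to R'$, $\delta:S\to S'$ ring isomorphisms, $u:M\to M'$, $v:N\to N'$ additive bijections with $u(rms)=\gamma(r)u(m)\delta(s)$, $v(snr)=\delta(s)v(n)\gamma(r)$, and $m'_0\in M'$, $n'_0\in N'$ with $[m'_0,N']=0$, $(N',m'_0)=0$, $[M',n'_0]=0$, $(n'_0,M')=0$, $[u(m),v(n)]=\gamma([m,n])$,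 $(v(n),u(m))=\delta((n,m))$; and $\mathrm{Iso}_0^1(T,T')$ is the set of maps $\psi\left(\left[\begin{smallmatrix} r & m\\ n & s\end{smallmatrix}\right]\right)=\left[\begin{smallmatrix}\sigma(s) & m'_*\rho(r)-\sigma(s)m'_*+\nu(n)\\ \rho(r)n'_*-n'_*\sigma(s)+\mu(m) & \rho(r)\end{smallmatrix}\right]$ with $\rho:R\to S'$, $\sigma:S\to R'$ ring isomorphisms, $\mu:M\to N'$, $\nu:N\to M'$ additive bijections with $\mu(rms)=\rho(r)\mu(m)\sigma(s)$, $\nu(snr)=\sigma(s)\nu(n)\rho(r)$, and $m'_*\in M'$, $n'_*\in N'$ with $[m'_*,N']=0$, $(N',m'_* )=0$, $[M',n'_*]=0$, $(n'_*,M')=0$, $(\mu(m),\nu(n))=\rho([m,n])$, $[\nu(n),\mu(m)]=\sigma((n,m))$. All such maps are ring isomorphisms. *)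

(* Defs.v *)
From HB Require Import structures.
From mathcomp Require Import all_boot all_order all_algebra.
Set Implicit Arguments. Unset Strict Implicit. Unset Printing Implicit Defensive.
Import GRing.Theory.
Local Open Scope ring_scope.

(* A Morita context (R,S,M,N,f,g): M an R-S-bimodule, N an S-R-bimodule,
   [m,n] = pMN m n : R and (n,m) = pNM n m : S coming from bimodule
   morphisms M (x)_S N -> R and N (x)_R M -> S, with the two
   associativity conditions. *)
Record morita_context (R S : nzRingType) (M N : zmodType) := MoritaContext {
  actRM : R -> M -> M;
  actMS : M -> S -> M;
  actSN : S -> N -> N;
  actNR : N -> R -> N;
  pMN : M -> N -> R;
  pNM : N -> M -> S;
  actRM_addl : forall r1 r2 m, actRM (r1 + r2) m = actRM r1 m + actRM r2 m;
  actRM_addr : forall r m1 m2, actRM r (m1 + m2) = actRM r m1 + actRM r m2;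
  actRM_mul : forall r1 r2 m, actRM (r1 * r2) m = actRM r1 (actRM r2 m);
  actRM_one : forall m, actRM 1 m = m;
  actMS_addl : forall m1 m2 s, actMS (m1 + m2) s = actMS m1 s + actMS m2 s;
  actMS_addr : forall m s1 s2, actMS m (s1 + s2) = actMS m s1 + actMS m s2;
  actMS_mul : forall m s1 s2, actMS m (s1 * s2) = actMS (actMS m s1) s2;
  actMS_one : forall m, actMS m 1 = m;
  actRMS : forall r m s, actMS (actRM r m) s = actRM r (actMS m s);
  actSN_addl : forall s1 s2 n, actSN (s1 + s2) n = actSN s1 n + actSN s2 n;
  actSN_addr : forall s n1 n2, actSN s (n1 + n2) = actSN s n1 + actSN s n2;
  actSN_mul : forall s1 s2 n, actSN (s1 * s2) n = actSN s1 (actSN s2 n);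
  actSN_one : forall n, actSN 1 n = n;
  actNR_addl : forall n1 n2 r, actNR (n1 + n2) r = actNR n1 r + actNR n2 r;
  actNR_addr : forall n r1 r2, actNR n (r1 + r2) = actNR n r1 + actNR n r2;
  actNR_mul : forall n r1 r2, actNR n (r1 * r2) = actNR (actNR n r1) r2;
  actNR_one : forall n, actNR n 1 = n;
  actSNR : forall s n r, actNR (actSN s n) r = actSN s (actNR n r);
  pMN_addl : forall m1 m2 n, pMN (m1 + m2) n = pMN m1 n + pMN m2 n;
  pMN_addr : forall m n1 n2, pMN m (n1 + n2) = pMN m n1 + pMN m n2;
  pMN_bal : forall m s n, pMN (actMS m s) n = pMN m (actSN s n);
  pMN_l : forall r m n, pMN (actRM r m) n = r * pMN m n;
  pMN_r : forall m n r, pMN m (actNR n r) = pMN m n * r;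
  pNM_addl : forall n1 n2 m, pNM (n1 + n2) m = pNM n1 m + pNM n2 m;
  pNM_addr : forall n m1 m2, pNM n (m1 + m2) = pNM n m1 + pNM n m2;
  pNM_bal : forall n r m, pNM (actNR n r) m = pNM n (actRM r m);
  pNM_l : forall s n m, pNM (actSN s n) m = s * pNM n m;
  pNM_r : forall n m s, pNM n (actMS m s) = pNM n m * s;
  assoc_M : forall m n m', actRM (pMN m n) m' = actMS m (pNM n m');
  assoc_N : forall n m n', actSN (pNM n m) n' = actNR n (pMN m n')
}.

Record mc_elt (R S M N : Type) := MCElt { e11 : R; e12 : M; e21 : N; e22 : S }.

Section MCRing.
Variables (R S : nzRingType) (M N : zmodType) (C : morita_context R S M N).

Definition mc_add (x y : mc_elt R S M N) : mc_elt R S M N :=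
  MCElt (e11 x + e11 y) (e12 x + e12 y) (e21 x + e21 y) (e22 x + e22 y).

Definition mc_one : mc_elt R S M N := MCElt 1 0 0 1.

Definition mc_mul (x y : mc_elt R S M N) : mc_elt R S M N :=
  MCElt (e11 x * e11 y + pMN C (e12 x) (e21 y))
        (actRM C (e11 x) (e12 y) + actMS C (e12 x) (e22 y))
        (actNR C (e21 x) (e11 y) + actSN C (e22 x) (e21 y))
        (pNM C (e21 x) (e12 y) + e22 x * e22 y).

(* Homogeneous components of the Z-grading. *)
Definition in_Tm1 (x : mc_elt R S M N) : Prop := e11 x = 0 /\ e12 x = 0 /\ e22 x = 0.
Definition in_T0 (x : mc_elt R S M N) : Prop := e12 x = 0 /\ e21 x = 0.
Definition in_T1 (x : mc_elt R S M N) : Prop := e11 x = 0 /\ e21 x = 0 /\ e22 x = 0.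
End MCRing.

Definition ring_iso (A B : nzRingType) (f : A -> B) : Prop :=
  (forall x y, f (x + y) = f x + f y) /\ (forall x y, f (x * y) = f x * f y) /\
  f 1 = 1 /\ bijective f.

Definition additive_bij (A B : zmodType) (f : A -> B) : Prop :=
  (forall x y, f (x + y) = f x + f y) /\ bijective f.

Definition indecomposable (A : nzRingType) : Prop :=
  forall e : A, e * e = e -> (forall x : A, e * x = x * e) -> e = 0 \/ e = 1.

Section Isos.
Variables (R S : nzRingType) (M N : zmodType) (C : morita_context R S M N).
Variables (R' S' : nzRingType) (M' N' : zmodType) (C' : morita_context R' S' M' N').

Local Notation T := (mc_elt R S M N).
Local Notation T' := (mc_elt R' S' M' N').

Definition mc_ring_iso (phi : T -> T') : Prop :=
  (forall x y, phi (mc_add x y) = mc_add (phi x) (phi y)) /\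
  (forall x y, phi (mc_mul C x y) = mc_mul C' (phi x) (phi y)) /\
  phi (mc_one R S M N) = mc_one R' S' M' N' /\ bijective phi.

Definition graded (phi : T -> T') : Prop :=
  (forall x, in_Tm1 x -> in_Tm1 (phi x)) /\ (forall x, in_T0 x -> in_T0 (phi x)) /\
  (forall x, in_T1 x -> in_T1 (phi x)).

Definition antigraded (phi : T -> T') : Prop :=
  (forall x, in_Tm1 x -> in_T1 (phi x)) /\ (forall x, in_T0 x -> in_T0 (phi x)) /\
  (forall x, in_T1 x -> in_Tm1 (phi x)).

Definition semigraded (phi : T -> T') : Prop :=
  (forall x, in_Tm1 x -> in_Tm1 (phi x)) /\ (forall x, in_T1 x -> in_T1 (phi x)).

Definition antisemigraded (phi : T -> T') : Prop :=
  (forall x, in_Tm1 x -> in_T1 (phi x)) /\ (forall x, in_T1 x -> in_Tm1 (phi x)).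

Definition Iso_g (phi : T -> T') : Prop :=
  mc_ring_iso phi /\ (graded phi \/ antigraded phi).

Definition Iso_0_0 (phi : T -> T') : Prop :=
  exists (gamma : R -> R') (delta : S -> S') (u : M -> M') (v : N -> N')
         (m0 : M') (n0 : N'),
    ring_iso gamma /\ ring_iso delta /\ additive_bij u /\ additive_bij v /\
        (forall r m s, u (actRM C r (actMS C m s))
                       = actRM C' (gamma r) (actMS C' (u m) (delta s))) /\
        (forall s n r, v (actSN C s (actNR C n r))
                       = actSN C' (delta s) (actNR C' (v n) (gamma r))) /\
        ((forall n', pMN C' m0 n' = 0) /\ (forall n', pNM C' n' m0 = 0)) /\
        (forall m', pMN C' m' n0 = 0) /\ (forall m', pNM C' n0 m' = 0) /\
        (forall m n, pMN C' (u m) (v n) = gamma (pMN C m n)) /\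
        (forall m n, pNM C' (v n) (u m) = delta (pNM C n m)) /\
        (forall x : T, phi x =
           MCElt (gamma (e11 x))
                 (actRM C' (gamma (e11 x)) m0 - actMS C' m0 (delta (e22 x)) + u (e12 x))
                 (actNR C' n0 (gamma (e11 x)) - actSN C' (delta (e22 x)) n0 + v (e21 x))
                 (delta (e22 x))).

Definition Iso_0_1 (psi : T -> T') : Prop :=
  exists (rho : R -> S') (sigma : S -> R') (mu : M -> N') (nu : N -> M')
         (ms : M') (ns : N'),
    ring_iso rho /\ ring_iso sigma /\ additive_bij mu /\ additive_bij nu /\
        (forall r m s, mu (actRM C r (actMS C m s))
                       = actSN C' (rho r) (actNR C' (mu m) (sigma s))) /\
        (forall s n r, nu (actSN C s (actNR C n r))
                       = actRM C' (sigma s) (actMS C' (nu n) (rho r))) /\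
        ((forall n', pMN C' ms n' = 0) /\ (forall n', pNM C' n' ms = 0)) /\
        (forall m', pMN C' m' ns = 0) /\ (forall m', pNM C' ns m' = 0) /\
        (forall m n, pNM C' (mu m) (nu n) = rho (pMN C m n)) /\
        (forall m n, pMN C' (nu n) (mu m) = sigma (pNM C n m)) /\
        (forall x : T, psi x =
           MCElt (sigma (e22 x))
                 (actMS C' ms (rho (e11 x)) - actRM C' (sigma (e22 x)) ms + nu (e21 x))
                 (actSN C' (rho (e11 x)) ns - actNR C' ns (sigma (e22 x)) + mu (e12 x))
                 (rho (e11 x))).

Definition Iso_0 (phi : T -> T') : Prop := Iso_0_0 phi \/ Iso_0_1 phi.
End Isos.

(* Main.v *)
Require Import Defs.
From HB Require Import structures.
From mathcomp Require Import all_boot all_order all_algebra.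
Local Open Scope ring_scope.

Set Implicit Arguments. Unset Strict Implicit. Unset Printing Implicit Defensive.
Import GRing.Theory.


Lemma fadd0 (A B : zmodType) (f : A -> B) :
  (forall x y, f (x + y) = f x + f y) -> f 0 = 0.
Proof. by move=> H; apply: (@addrI _ (f 0)); rewrite addr0 -H addr0. Qed.
Lemma faddN (A B : zmodType) (f : A -> B) :
  (forall x y, f (x + y) = f x + f y) -> forall x, f (- x) = - f x.
Proof. move=> H x; apply/eqP; rewrite -subr_eq0 opprK -H addNr. by rewrite (fadd0 H). Qed.
Lemma faddB (A B : zmodType) (f : A -> B) :
  (forall x y, f (x + y) = f x + f y) -> forall x y, f (x - y) = f x - f y.
Proof. by move=> H x y; rewrite H (faddN H). Qed.

Section Basic.
Variables (R S : nzRingType) (M N : zmodType) (C : morita_context R S M N).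

Lemma actRM0l m : actRM C 0 m = 0. Proof. exact: (fadd0 (fun r => actRM_addl C r ^~ m)). Qed.
Lemma actRM0r r : actRM C r 0 = 0. Proof. exact: (fadd0 (actRM_addr C r)). Qed.
Lemma actRMNl r m : actRM C (- r) m = - actRM C r m. Proof. exact: (faddN (fun r => actRM_addl C r ^~ m)). Qed.
Lemma actRMNr r m : actRM C r (- m) = - actRM C r m. Proof. exact: (faddN (actRM_addr C r)). Qed.
Lemma actMS0l s : actMS C 0 s = 0. Proof. exact: (fadd0 (fun m => actMS_addl C m ^~ s)). Qed.
Lemma actMS0r m : actMS C m 0 = 0. Proof. exact: (fadd0 (actMS_addr C m)). Qed.
Lemma actMSNl m s : actMS C (- m) s = - actMS C m s. Proof. exact: (faddN (fun m => actMS_addl C m ^~ s)). Qed.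
Lemma actMSNr m s : actMS C m (- s) = - actMS C m s. Proof. exact: (faddN (actMS_addr C m)). Qed.
Lemma actSN0l n : actSN C 0 n = 0. Proof. exact: (fadd0 (fun s => actSN_addl C s ^~ n)). Qed.
Lemma actSN0r s : actSN C s 0 = 0. Proof. exact: (fadd0 (actSN_addr C s)). Qed.
Lemma actSNNl s n : actSN C (- s) n = - actSN C s n. Proof. exact: (faddN (fun s => actSN_addl C s ^~ n)). Qed.
Lemma actSNNr s n : actSN C s (- n) = - actSN C s n. Proof. exact: (faddN (actSN_addr C s)). Qed.
Lemma actNR0l r : actNR C 0 r = 0. Proof. exact: (fadd0 (fun n => actNR_addl C n ^~ r)). Qed.
Lemma actNR0r n : actNR C n 0 = 0. Proof. exact: (fadd0 (actNR_addr C n)). Qed.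
Lemma actNRNl n r : actNR C (- n) r = - actNR C n r. Proof. exact: (faddN (fun n => actNR_addl C n ^~ r)). Qed.
Lemma actNRNr n r : actNR C n (- r) = - actNR C n r. Proof. exact: (faddN (actNR_addr C n)). Qed.
Lemma pMN0l n : pMN C 0 n = 0. Proof. exact: (fadd0 (fun m => pMN_addl C m ^~ n)). Qed.
Lemma pMN0r m : pMN C m 0 = 0. Proof. exact: (fadd0 (pMN_addr C m)). Qed.
Lemma pMNNl m n : pMN C (- m) n = - pMN C m n. Proof. exact: (faddN (fun m => pMN_addl C m ^~ n)). Qed.
Lemma pMNNr m n : pMN C m (- n) = - pMN C m n. Proof. exact: (faddN (pMN_addr C m)). Qed.
Lemma pNM0l m : pNM C 0 m = 0. Proof. exact: (fadd0 (fun n => pNM_addl C n ^~ m)). Qed.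
Lemma pNM0r n : pNM C n 0 = 0. Proof. exact: (fadd0 (pNM_addr C n)). Qed.
Lemma pNMNl n m : pNM C (- n) m = - pNM C n m. Proof. exact: (faddN (fun n => pNM_addl C n ^~ m)). Qed.
Lemma pNMNr n m : pNM C n (- m) = - pNM C n m. Proof. exact: (faddN (pNM_addr C n)). Qed.

End Basic.

Definition zsimp := (actRM0l, actRM0r, actMS0l, actMS0r, actSN0l, actSN0r,
  actNR0l, actNR0r, pMN0l, pMN0r, pNM0l, pNM0r, mulr0, mul0r, addr0, add0r, oppr0).


Lemma zrearr (Z : zmodType) (P Q T X W : Z) :
  P - Q + X + (Q - T + W) = P - T + (X + W).
Proof. by rewrite addrACA -[P - Q + _]addrA addKr. Qed.

Section Fwd.
Variables (R S : nzRingType) (M N : zmodType) (C : morita_context R S M N).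
Variables (R' S' : nzRingType) (M' N' : zmodType) (C' : morita_context R' S' M' N').

Variables (g : R -> R') (d : S -> S') (u : M -> M') (v : N -> N') (m0 : M') (n0 : N').
Hypotheses (Hg : ring_iso g) (Hd : ring_iso d) (Hu : additive_bij u) (Hv : additive_bij v).
Hypothesis Hum : forall r m s, u (actRM C r (actMS C m s))
                       = actRM C' (g r) (actMS C' (u m) (d s)).
Hypothesis Hvn : forall s n r, v (actSN C s (actNR C n r))
                       = actSN C' (d s) (actNR C' (v n) (g r)).
Hypotheses (Hm0a : forall n', pMN C' m0 n' = 0) (Hm0b : forall n', pNM C' n' m0 = 0).
Hypotheses (Hn0a : forall m', pMN C' m' n0 = 0) (Hn0b : forall m', pNM C' n0 m' = 0).
Hypothesis Hp1 : forall m n, pMN C' (u m) (v n) = g (pMN C m n).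
Hypothesis Hp2 : forall m n, pNM C' (v n) (u m) = d (pNM C n m).

Definition Fm (x : mc_elt R S M N) : mc_elt R' S' M' N' :=
  MCElt (g (e11 x)) (actRM C' (g (e11 x)) m0 - actMS C' m0 (d (e22 x)) + u (e12 x))
        (actNR C' n0 (g (e11 x)) - actSN C' (d (e22 x)) n0 + v (e21 x)) (d (e22 x)).

Let gadd : forall x y, g (x + y) = g x + g y. Proof. by case: Hg. Qed.
Let gmul : forall x y, g (x * y) = g x * g y. Proof. by case: Hg => _ []. Qed.
Let g1 : g 1 = 1. Proof. by case: Hg => _ [] _ []. Qed.
Let dadd : forall x y, d (x + y) = d x + d y. Proof. by case: Hd. Qed.
Let dmul : forall x y, d (x * y) = d x * d y. Proof. by case: Hd => _ []. Qed.
Let d1 : d 1 = 1. Proof. by case: Hd => _ [] _ []. Qed.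
Let uadd : forall x y, u (x + y) = u x + u y. Proof. by case: Hu. Qed.
Let vadd : forall x y, v (x + y) = v x + v y. Proof. by case: Hv. Qed.
Let g0 : g 0 = 0. Proof. exact: fadd0 gadd. Qed.
Let d0 : d 0 = 0. Proof. exact: fadd0 dadd. Qed.
Let u0 : u 0 = 0. Proof. exact: fadd0 uadd. Qed.
Let v0 : v 0 = 0. Proof. exact: fadd0 vadd. Qed.
Let ul r m : u (actRM C r m) = actRM C' (g r) (u m).
Proof. by have := Hum r m 1; rewrite !actMS_one d1 actMS_one. Qed.
Let ur m s : u (actMS C m s) = actMS C' (u m) (d s).
Proof. by have := Hum 1 m s; rewrite !actRM_one g1 actRM_one. Qed.
Let vl s n : v (actSN C s n) = actSN C' (d s) (v n).
Proof. by have := Hvn s n 1; rewrite !actNR_one g1 actNR_one. Qed.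
Let vr n r : v (actNR C n r) = actNR C' (v n) (g r).
Proof. by have := Hvn 1 n r; rewrite !actSN_one d1 actSN_one. Qed.

Lemma Fm_add x y : Fm (mc_add x y) = mc_add (Fm x) (Fm y).
Proof.
case: x => r m n s; case: y => r' m' n' s'; rewrite /Fm /mc_add /=.
rewrite gadd dadd uadd vadd actRM_addl actMS_addr actNR_addr actSN_addl.
congr MCElt.
  by rewrite opprD [RHS]addrACA [X in X + _ = _]addrACA.
by rewrite opprD [RHS]addrACA [X in X + _ = _]addrACA.
Qed.


Lemma Fm_mul x y : Fm (mc_mul C x y) = mc_mul C' (Fm x) (Fm y).
Proof.
case: x => r m n s; case: y => r' m' n' s'; rewrite /Fm /mc_mul /=.
have aM1 : forall a b n1, pMN C' (actRM C' a m0 - actMS C' m0 b) n1 = 0.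
  by move=> a b n1; rewrite pMN_addl pMNNl pMN_l pMN_bal !Hm0a mulr0 subrr.
have aM2 : forall a b n1, pNM C' n1 (actRM C' a m0 - actMS C' m0 b) = 0.
  by move=> a b n1; rewrite pNM_addr pNMNr pNM_r -pNM_bal !Hm0b mul0r subrr.
have aN1 : forall a b m1, pMN C' m1 (actNR C' n0 a - actSN C' b n0) = 0.
  by move=> a b m1; rewrite pMN_addr pMNNr pMN_r -pMN_bal !Hn0a mul0r subrr.
have aN2 : forall a b m1, pNM C' (actNR C' n0 a - actSN C' b n0) m1 = 0.
  by move=> a b m1; rewrite pNM_addl pNMNl pNM_l pNM_bal !Hn0b mulr0 subrr.
congr MCElt.
- by rewrite pMN_addl aM1 add0r pMN_addr aN1 add0r gadd gmul Hp1.
- rewrite gadd dadd gmul dmul -Hp1 -Hp2 actRM_addl actMS_addr actRM_mul actMS_mul.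
  rewrite assoc_M Hm0b actMS0r -assoc_M Hm0a actRM0l addr0 add0r uadd ul ur.
  rewrite actRM_addr actRM_addr actRMNr actMS_addl actMS_addl actMSNl actRMS.
  by rewrite zrearr.
- rewrite gadd dadd gmul dmul -Hp1 -Hp2 actNR_addr actSN_addl actNR_mul actSN_mul.
  rewrite -assoc_N Hn0b actSN0l assoc_N Hn0a actNR0r addr0 add0r vadd vl vr.
  rewrite actNR_addl actNR_addl actNRNl actSN_addr actSN_addr actSNNr actSNR.
  by rewrite zrearr.
- by rewrite pNM_addl aN2 add0r pNM_addr aM2 add0r dadd dmul Hp2.
Qed.

Lemma addrKl' (Z : zmodType) (x y : Z) : x + y - x = y.
Proof. by rewrite addrC addKr. Qed.
Lemma addrNK' (Z : zmodType) (x y : Z) : x + (y - x) = y.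
Proof. by rewrite addrC subrK. Qed.

Lemma Fm_iso (phi : mc_elt R S M N -> mc_elt R' S' M' N') :
  (forall x, phi x = Fm x) -> mc_ring_iso C C' phi /\ semigraded phi.
Proof.
move=> Hphi; split; last first.
  split=> -[r m n s]; rewrite Hphi /Fm /in_Tm1 /in_T1 /= => -[-> [-> ->]];
  by rewrite g0 d0 ?u0 ?v0 !zsimp ?subrr.
split; first by move=> x y; rewrite !Hphi Fm_add.
split; first by move=> x y; rewrite !Hphi Fm_mul.
split; first by rewrite Hphi /Fm /= g1 d1 u0 v0 actRM_one actMS_one actNR_one actSN_one !subrr !addr0.
case: Hg => _ [_ [_ [gi gK giK]]]; case: Hd => _ [_ [_ [di dK diK]]].
case: Hu => _ [ui uK uiK]; case: Hv => _ [vi vK viK].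
exists (fun y => MCElt (gi (e11 y)) (ui (e12 y - (actRM C' (e11 y) m0 - actMS C' m0 (e22 y))))
   (vi (e21 y - (actNR C' n0 (e11 y) - actSN C' (e22 y) n0))) (di (e22 y))).
  by move=> x; rewrite Hphi; case: x => r m n s; rewrite /Fm /= gK dK addrKl' uK addrKl' vK.
by move=> y; rewrite Hphi; case: y => r m n s; rewrite /Fm /= giK diK uiK viK !addrNK'.
Qed.
End Fwd.


Lemma xxx0 (Z : zmodType) (x : Z) : x = x + x -> x = 0.
Proof. by move=> h; apply: (@addrI _ x); rewrite addr0 -h. Qed.

Section Bwd.
Variables (R S : nzRingType) (M N : zmodType) (C : morita_context R S M N).
Variables (R' S' : nzRingType) (M' N' : zmodType) (C' : morita_context R' S' M' N').
Hypotheses (HR : indecomposable R') (HS : indecomposable S').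
Hypothesis Hnz : (exists m' : M', m' != 0) \/ (exists n' : N', n' != 0).
Variable phi : mc_elt R S M N -> mc_elt R' S' M' N'.
Hypothesis Hiso : mc_ring_iso C C' phi.
Hypothesis Hsg : semigraded phi.

Let padd : forall x y, phi (mc_add x y) = mc_add (phi x) (phi y). Proof. by case: Hiso. Qed.
Let pmul : forall x y, phi (mc_mul C x y) = mc_mul C' (phi x) (phi y). Proof. by case: Hiso => _ []. Qed.
Let p1 : phi (mc_one R S M N) = mc_one R' S' M' N'. Proof. by case: Hiso => _ [] _ []. Qed.
Let pbij : bijective phi. Proof. by case: Hiso => _ [] _ []. Qed.
Let pinj : injective phi. Proof. exact: bij_inj. Qed.

Let p0 : phi (MCElt 0 0 0 0) = MCElt 0 0 0 0.
Proof.
have := padd (MCElt 0 0 0 0) (MCElt 0 0 0 0); rewrite /mc_add /= !addr0.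
by case: (phi _) => a b c d [/xxx0-> /xxx0-> /xxx0-> /xxx0->].
Qed.

Let sand1 y : in_T1 (mc_mul C' (phi (MCElt 1 0 0 0)) (mc_mul C' y (phi (MCElt 0 0 0 1)))).
Proof.
case: pbij => pi pK piK; rewrite -[y]piK -!pmul; apply: (proj2 Hsg).
by case: (pi y) => r m n s; rewrite /in_T1 /mc_mul /= !zsimp.
Qed.

Let sand2 y : in_Tm1 (mc_mul C' (phi (MCElt 0 0 0 1)) (mc_mul C' y (phi (MCElt 1 0 0 0)))).
Proof.
case: pbij => pi pK piK; rewrite -[y]piK -!pmul; apply: (proj1 Hsg).
by case: (pi y) => r m n s; rewrite /in_Tm1 /mc_mul /= !zsimp.
Qed.

Let ef : mc_add (phi (MCElt 1 0 0 0)) (phi (MCElt 0 0 0 1)) = mc_one R' S' M' N'.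
Proof. by rewrite -padd -p1 /mc_add /= !zsimp. Qed.

Lemma bwd_e : exists m0 n0, phi (MCElt 1 0 0 0) = MCElt 1 m0 n0 0 /\
   phi (MCElt 0 0 0 1) = MCElt 0 (- m0) (- n0) 1 /\
   (forall n', pMN C' m0 n' = 0) /\ (forall n', pNM C' n' m0 = 0) /\
   (forall m', pMN C' m' n0 = 0) /\ (forall m', pNM C' n0 m' = 0).
Proof.
move: ef (sand1) (sand2).
case He11: (phi (MCElt 1 0 0 0)) => [a m0 n0 b]; case He22: (phi (MCElt 0 0 0 1)) => [a' m1 n1 b'].
rewrite /mc_add /= => -[ea em en eb] s1 s2.
have ea' : a' = 1 - a by rewrite -ea addrC addKr.
have eb' : b' = 1 - b by rewrite -eb addrC addKr.
have em' : m1 = - m0 by apply/eqP; rewrite -addr_eq0 addrC em.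
have en' : n1 = - n0 by apply/eqP; rewrite -addr_eq0 addrC en.
subst a' b' m1 n1.
have zs2 := (zsimp, mul1r, mulr1, actRM_one, actMS_one, actSN_one, actNR_one).
have A1 := fun r' => ltac:(have h := s1 (MCElt r' 0 0 0); rewrite /in_T1 /mc_mul /= !zs2 ?addr0 ?add0r in h; exact h).
have A2 := fun r' => ltac:(have h := s2 (MCElt r' 0 0 0); rewrite /in_Tm1 /mc_mul /= !zs2 ?addr0 ?add0r in h; exact h).
have B1 := fun s' => ltac:(have h := s1 (MCElt 0 0 0 s'); rewrite /in_T1 /mc_mul /= !zs2 ?addr0 ?add0r in h; exact h).
have B2 := fun s' => ltac:(have h := s2 (MCElt 0 0 0 s'); rewrite /in_Tm1 /mc_mul /= !zs2 ?addr0 ?add0r in h; exact h).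
have C1 := fun m' => ltac:(have h := s1 (MCElt 0 m' 0 0); rewrite /in_T1 /mc_mul /= !zs2 ?addr0 ?add0r in h; exact h).
have C2 := fun m' => ltac:(have h := s2 (MCElt 0 m' 0 0); rewrite /in_Tm1 /mc_mul /= !zs2 ?addr0 ?add0r in h; exact h).
have D1 := fun n' => ltac:(have h := s1 (MCElt 0 0 n' 0); rewrite /in_T1 /mc_mul /= !zs2 ?addr0 ?add0r in h; exact h).
have D2 := fun n' => ltac:(have h := s2 (MCElt 0 0 n' 0); rewrite /in_Tm1 /mc_mul /= !zs2 ?addr0 ?add0r in h; exact h).
have cen (T : nzRingType) (c : T) : (forall x, c * (x * (1 - c)) = 0) ->
  (forall x, (1 - c) * (x * c) = 0) -> c * c = c /\ forall x, c * x = x * c.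
  move=> h1 h2; have hc x : c * x = c * (x * c).
    by apply/eqP; rewrite -subr_eq0 -mulrBr -{1}[x]mulr1 -mulrBr h1.
  split; first by have := hc 1; rewrite mul1r mulr1 => <-.
  move=> x; rewrite hc; apply/esym/eqP; rewrite -subr_eq0.
  by rewrite -[X in X - _]mul1r -mulrBl h2.
have [ha hca] := cen _ a (fun x => (A1 x).1) (fun x => (A2 x).1).
have [hb hcb] := cen _ b (fun x => (B1 x).2.2) (fun x => (B2 x).2.2).
have E11nz : phi (MCElt 1 0 0 0) <> MCElt 0 0 0 0.
  by rewrite -p0 => /pinj [] /eqP; rewrite oner_eq0.
have E22nz : phi (MCElt 0 0 0 1) <> MCElt 0 0 0 0.
  by rewrite -p0 => /pinj [] /eqP; rewrite oner_eq0.
case: (HR ha hca) => ea0; subst a.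
  have m00 : m0 = 0 by have := (A2 1).2.1; rewrite subr0 !actRM_one.
  have n00 : n0 = 0 by have := (A1 1).2.1; rewrite subr0 mul1r actNR_one.
  subst m0 n0; case: (HS hb hcb) => eb0; subst b.
    by rewrite He11 in E11nz.
  exfalso; case: Hnz => [[m' /eqP]|[n' /eqP]]; apply.
    by have := (C2 m').2.1; rewrite subr0 actMS_one actRM_one.
  by have := (D1 n').2.1; rewrite subr0 actNR_one actSN_one.
case: (HS hb hcb) => eb0; subst b; last first.
  exfalso; have := pmul (MCElt 0 0 0 1) (MCElt 0 0 0 1).
  rewrite /mc_mul /= !zs2 He22 /= !subrr !zs2 => -[_ /eqP].
  rewrite oppr_eq0 => /eqP m00 /eqP; rewrite oppr_eq0 => /eqP n00 _.
  by move: E22nz; rewrite He22 m00 n00 !subrr !oppr0; apply.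
exists m0, n0; split; first by [].
split; first by rewrite subrr subr0.
split.
  move=> n'; have := (D2 n').1; rewrite actNR_one pMNNl => /eqP.
  by rewrite oppr_eq0 => /eqP.
split; first by move=> n'; have := (D2 n').2.2; rewrite subr0 mul1r.
split; first by move=> m'; have := (C1 m').1; rewrite mul1r pMNNr => /eqP; rewrite oppr_eq0 => /eqP.
by move=> m'; have := (C1 m').2.2; rewrite subr0 actMS_one.
Qed.

Lemma bwd : Iso_0_0 C C' phi.
Proof.
have [m0 [n0 [He11 [He22 [Hm0a [Hm0b [Hn0a Hn0b]]]]]]] := bwd_e.
have zs2 := (zsimp, mul1r, mulr1, actRM_one, actMS_one, actSN_one, actNR_one).
pose g := fun r => e11 (phi (MCElt r 0 0 0)).
pose d := fun s => e22 (phi (MCElt 0 0 0 s)).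
pose u := fun m => e12 (phi (MCElt 0 m 0 0)).
pose v := fun n => e21 (phi (MCElt 0 0 n 0)).
have phiR r : phi (MCElt r 0 0 0) = MCElt (g r) (actRM C' (g r) m0) (actNR C' n0 (g r)) 0.
  have h := pmul (mc_mul C (MCElt 1 0 0 0) (MCElt r 0 0 0)) (MCElt 1 0 0 0).
  rewrite (pmul (MCElt 1 0 0 0)) He11 /mc_mul /= !zs2 in h.
  rewrite /g; case: (phi (MCElt r 0 0 0)) h => p q w t /= ->.
  by rewrite !Hm0a !Hn0a Hn0b Hm0b !zs2.
have phiS s : phi (MCElt 0 0 0 s) = MCElt 0 (- actMS C' m0 (d s)) (- actSN C' (d s) n0) (d s).
  have h := pmul (mc_mul C (MCElt 0 0 0 1) (MCElt 0 0 0 s)) (MCElt 0 0 0 1).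
  rewrite (pmul (MCElt 0 0 0 1)) He22 /mc_mul /= !zs2 in h.
  rewrite /d; case: (phi (MCElt 0 0 0 s)) h => p q w t /= ->.
  by rewrite !(pMNNl, pMNNr, pNMNl, pNMNr) !Hm0a !Hm0b !Hn0a !Hn0b !oppr0 !zs2 actMSNl actSNNr.
have phiM m : phi (MCElt 0 m 0 0) = MCElt 0 (u m) 0 0.
  have := (proj2 Hsg) (MCElt 0 m 0 0) (conj erefl (conj erefl erefl)).
  by rewrite /u; case: (phi _) => p q w t; rewrite /in_T1 /= => -[-> [-> ->]].
have phiN n : phi (MCElt 0 0 n 0) = MCElt 0 0 (v n) 0.
  have := (proj1 Hsg) (MCElt 0 0 n 0) (conj erefl (conj erefl erefl)).
  by rewrite /v; case: (phi _) => p q w t; rewrite /in_Tm1 /= => -[-> [-> ->]].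
have g0 : g 0 = 0 by rewrite /g p0.
have d0 : d 0 = 0 by rewrite /d p0.
have u0 : u 0 = 0 by rewrite /u p0.
have v0 : v 0 = 0 by rewrite /v p0.
have Hform x : phi x = MCElt (g (e11 x))
     (actRM C' (g (e11 x)) m0 - actMS C' m0 (d (e22 x)) + u (e12 x))
     (actNR C' n0 (g (e11 x)) - actSN C' (d (e22 x)) n0 + v (e21 x)) (d (e22 x)).
  case: x => r m n s.
  have -> : MCElt r m n s = mc_add (mc_add (mc_add (MCElt r 0 0 0) (MCElt 0 m 0 0))
      (MCElt 0 0 n 0)) (MCElt 0 0 0 s) by rewrite /mc_add /= !addr0 !add0r.
  rewrite !padd phiR phiS phiM phiN /mc_add /= !addr0 !add0r.
  by congr MCElt; rewrite addrAC.
case: pbij => phii pK piK.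
have ginj : injective g.
  by move=> x y h; have := phiR x; rewrite h -phiR => /pinj [].
have dinj : injective d.
  by move=> x y h; have := phiS x; rewrite h -phiS => /pinj [].
have uinj : injective u.
  by move=> x y h; have := phiM x; rewrite h -phiM => /pinj [].
have vinj : injective v.
  by move=> x y h; have := phiN x; rewrite h -phiN => /pinj [].
have gK : cancel (fun y => e11 (phii (MCElt y 0 0 0))) g.
  by move=> y; have := Hform (phii (MCElt y 0 0 0)); rewrite piK => -[].
have dK : cancel (fun y => e22 (phii (MCElt 0 0 0 y))) d.
  by move=> y; have := Hform (phii (MCElt 0 0 0 y)); rewrite piK => -[].
have uK : cancel (fun y => e12 (phii (MCElt 0 y 0 0))) u.
  move=> y; have := Hform (phii (MCElt 0 y 0 0)); rewrite piK => -[h1 h2 h3 h4].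
  have e1 : e11 (phii (MCElt 0 y 0 0)) = 0 by apply: ginj; rewrite g0 -h1.
  have e4 : e22 (phii (MCElt 0 y 0 0)) = 0 by apply: dinj; rewrite d0 -h4.
  rewrite e1 e4 g0 d0 !zs2 ?subrr ?add0r in h2 h3.
  by [apply: esym].
have vK : cancel (fun y => e21 (phii (MCElt 0 0 y 0))) v.
  move=> y; have := Hform (phii (MCElt 0 0 y 0)); rewrite piK => -[h1 h2 h3 h4].
  have e1 : e11 (phii (MCElt 0 0 y 0)) = 0 by apply: ginj; rewrite g0 -h1.
  have e4 : e22 (phii (MCElt 0 0 y 0)) = 0 by apply: dinj; rewrite d0 -h4.
  rewrite e1 e4 g0 d0 !zs2 ?subrr ?add0r in h2 h3.
  by [apply: esym].
have gadd x y : g (x + y) = g x + g y.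
  have := padd (MCElt x 0 0 0) (MCElt y 0 0 0).
  by rewrite /mc_add /= !addr0 /g => ->.
have dadd x y : d (x + y) = d x + d y.
  have := padd (MCElt 0 0 0 x) (MCElt 0 0 0 y).
  by rewrite /mc_add /= !addr0 /d => ->.
have uadd x y : u (x + y) = u x + u y.
  have := padd (MCElt 0 x 0 0) (MCElt 0 y 0 0).
  by rewrite /mc_add /= !addr0 /u => ->.
have vadd x y : v (x + y) = v x + v y.
  have := padd (MCElt 0 0 x 0) (MCElt 0 0 y 0).
  by rewrite /mc_add /= !addr0 /v => ->.
have gmul x y : g (x * y) = g x * g y.
  have := pmul (MCElt x 0 0 0) (MCElt y 0 0 0).
  rewrite phiR phiR /mc_mul /= !zs2 phiR => -[-> _ _ _].
  by rewrite pMN_l Hm0a !zs2.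
have dmul x y : d (x * y) = d x * d y.
  have := pmul (MCElt 0 0 0 x) (MCElt 0 0 0 y).
  rewrite phiS phiS /mc_mul /= !zs2 phiS => -[_ _ _ ->].
  by rewrite pNMNl pNM_l Hn0b !zs2.
have ul r m : u (actRM C r m) = actRM C' (g r) (u m).
  have := pmul (MCElt r 0 0 0) (MCElt 0 m 0 0).
  by rewrite phiR phiM /mc_mul /= !zs2 phiM => -[->].
have ur m s : u (actMS C m s) = actMS C' (u m) (d s).
  have := pmul (MCElt 0 m 0 0) (MCElt 0 0 0 s).
  by rewrite phiS phiM /mc_mul /= !zs2 phiM => -[_ ->].
have vl s n : v (actSN C s n) = actSN C' (d s) (v n).
  have := pmul (MCElt 0 0 0 s) (MCElt 0 0 n 0).
  by rewrite phiS phiN /mc_mul /= !zs2 phiN => /(congr1 (@e21 _ _ _ _)) /= ->.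
have vr n r : v (actNR C n r) = actNR C' (v n) (g r).
  have := pmul (MCElt 0 0 n 0) (MCElt r 0 0 0).
  by rewrite phiR phiN /mc_mul /= !zs2 phiN => /(congr1 (@e21 _ _ _ _)) /= ->.
have hp1 m n : pMN C' (u m) (v n) = g (pMN C m n).
  have := pmul (MCElt 0 m 0 0) (MCElt 0 0 n 0).
  by rewrite phiM phiN /mc_mul /= !zs2 phiR => -[->].
have hp2 m n : pNM C' (v n) (u m) = d (pNM C n m).
  have := pmul (MCElt 0 0 n 0) (MCElt 0 m 0 0).
  by rewrite phiM phiN /mc_mul /= !zs2 phiS => /(congr1 (@e22 _ _ _ _)) /= ->.
exists g, d, u, v, m0, n0.
split.
  split=> //; split=> //; split; first by rewrite /g He11.
  by exists (fun y => e11 (phii (MCElt y 0 0 0))) => //; apply: inj_can_sym.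
split.
  split=> //; split=> //; split; first by rewrite /d He22.
  by exists (fun y => e22 (phii (MCElt 0 0 0 y))) => //; apply: inj_can_sym.
split.
  by split=> //; exists (fun y => e12 (phii (MCElt 0 y 0 0))) => //; apply: inj_can_sym.
split.
  by split=> //; exists (fun y => e21 (phii (MCElt 0 0 y 0))) => //; apply: inj_can_sym.
split; first by move=> r m s; rewrite ul ur.
split; first by move=> s n r; rewrite vl vr.
by [].
Qed.
End Bwd.


Definition tau (A B X Y : Type) (y : mc_elt A B X Y) : mc_elt B A Y X :=
  MCElt (e22 y) (e21 y) (e12 y) (e11 y).
Lemma tauK (A B X Y : Type) (y : mc_elt A B X Y) : tau (tau y) = y.
Proof. by case: y. Qed.

Definition swapC (R S : nzRingType) (M N : zmodType) (C : morita_context R S M N) :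
  morita_context S R N M :=
  @MoritaContext S R N M (actSN C) (actNR C) (actRM C) (actMS C) (pNM C) (pMN C)
  (actSN_addl C) (actSN_addr C) (actSN_mul C) (actSN_one C)
  (actNR_addl C) (actNR_addr C) (actNR_mul C) (actNR_one C) (actSNR C)
  (actRM_addl C) (actRM_addr C) (actRM_mul C) (actRM_one C)
  (actMS_addl C) (actMS_addr C) (actMS_mul C) (actMS_one C) (actRMS C)
  (pNM_addl C) (pNM_addr C) (pNM_bal C) (pNM_l C) (pNM_r C)
  (pMN_addl C) (pMN_addr C) (pMN_bal C) (pMN_l C) (pMN_r C)
  (assoc_N C) (assoc_M C).

Section Swap.
Variables (R S : nzRingType) (M N : zmodType) (C : morita_context R S M N).
Variables (R' S' : nzRingType) (M' N' : zmodType) (C' : morita_context R' S' M' N').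
Variable psi : mc_elt R S M N -> mc_elt R' S' M' N'.

Lemma tau_mul (a b : mc_elt R' S' M' N') :
  tau (mc_mul C' a b) = mc_mul (swapC C') (tau a) (tau b).
Proof. by case: a => ? ? ? ?; case: b => ? ? ? ?; rewrite /tau /mc_mul /=; congr MCElt; rewrite addrC. Qed.

Lemma swap_iso : mc_ring_iso C C' psi <-> mc_ring_iso C (swapC C') (fun x => tau (psi x)).
Proof.
split.
  move=> [padd [pmul [p1 [pi pK piK]]]]; split; first by move=> x y; rewrite padd.
  split; first by move=> x y; rewrite pmul tau_mul.
  split; first by rewrite p1.
  by exists (fun z => pi (tau z)) => [x|z]; rewrite ?tauK ?pK ?piK ?tauK.
move=> [padd [pmul [p1 [pi pK piK]]]]; split.
  by move=> x y; rewrite -[psi (mc_add x y)]tauK padd.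
split.
  move=> x y; rewrite -[psi (mc_mul C x y)]tauK pmul -tau_mul tauK //.
split; first by rewrite -[psi _]tauK p1.
exists (fun z => pi (tau z)) => [x|z]; first by rewrite pK.
by rewrite -[psi _]tauK piK tauK.
Qed.

Lemma swap_sg : antisemigraded psi <-> semigraded (fun x => tau (psi x)).
Proof.
rewrite /antisemigraded /semigraded /in_Tm1 /in_T1 /=.
by split=> -[h1 h2]; split=> x; [move/h1|move/h2|move/h1|move/h2] => -[a [b c]].
Qed.

Lemma swap_I01 : Iso_0_1 C C' psi <-> Iso_0_0 C (swapC C') (fun x => tau (psi x)).
Proof.
split.
  move=> [g [d [u [v [m0 [n0 [H1 [H2 [H3 [H4 [H5 [H6 [H7 [H8 [H9 [H10 [H11 H12]]]]]]]]]]]]]]]]].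
  case: H7 => H7a H7b.
  exists g, d, u, v, n0, m0; do 6 (split; first by []).
  split; first by split.
  do 4 (split; first by []).
  by move=> x; rewrite H12.
move=> [g [d [u [v [m0 [n0 [H1 [H2 [H3 [H4 [H5 [H6 [H7 [H8 [H9 [H10 [H11 H12]]]]]]]]]]]]]]]]].
case: H7 => H7a H7b.
exists g, d, u, v, n0, m0; do 6 (split; first by []).
split; first by split.
do 4 (split; first by []).
by move=> x; rewrite -[psi x]tauK H12.
Qed.

End Swap.

Lemma part1 (R S : nzRingType) (M N : zmodType) (C : morita_context R S M N)
  (R' S' : nzRingType) (M' N' : zmodType) (C' : morita_context R' S' M' N') :
  indecomposable R' -> indecomposable S' ->
  ((exists m' : M', m' != 0) \/ (exists n' : N', n' != 0)) ->
  forall phi : mc_elt R S M N -> mc_elt R' S' M' N',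
         Iso_0_0 C C' phi <-> (mc_ring_iso C C' phi /\ semigraded phi).
Proof.
move=> HR HS Hnz phi; split; last by case=> Hi Hs; apply: (bwd HR HS Hnz Hi Hs).
move=> [g [d [u [v [m0 [n0 [H1 [H2 [H3 [H4 [H5 [H6 [[H7a H7b] [H8 [H9 [H10 [H11 H12]]]]]]]]]]]]]]]]].
exact: (Fm_iso H1 H2 H3 H4 H5 H6 H7a H7b H8 H9 H10 H11 H12).
Qed.

Unset Implicit Arguments.

Theorem theorem3p6
  (R S : nzRingType) (M N : zmodType) (C : morita_context R S M N)
  (R' S' : nzRingType) (M' N' : zmodType) (C' : morita_context R' S' M' N') :
  indecomposable R' -> indecomposable S' ->
  ((exists m' : M', m' != 0) \/ (exists n' : N', n' != 0)) ->
  [/\ (forall phi : mc_elt R S M N -> mc_elt R' S' M' N',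
         Iso_0_0 C C' phi <-> (mc_ring_iso C C' phi /\ semigraded phi)),
      (forall phi : mc_elt R S M N -> mc_elt R' S' M' N',
         Iso_0_1 C C' phi <-> (mc_ring_iso C C' phi /\ antisemigraded phi)) &
      (forall phi : mc_elt R S M N -> mc_elt R' S' M' N',
         Iso_g C C' phi -> Iso_0 C C' phi)].
Proof.
move=> HR HS Hnz.
have P1 := part1 C C' HR HS Hnz.
have Hnz' : (exists m' : N', m' != 0) \/ (exists n' : M', n' != 0).
  by case: Hnz; [right|left].
have P2 := part1 C (swapC C') HS HR Hnz'.
have Q2 : forall phi : mc_elt R S M N -> mc_elt R' S' M' N',
    Iso_0_1 C C' phi <-> (mc_ring_iso C C' phi /\ antisemigraded phi).
  move=> psi; split.
    move=> /swap_I01 /P2 [h1 h2]; split.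
      exact: (proj2 (swap_iso C C' psi) h1).
    exact: (proj2 (swap_sg psi) h2).
  move=> [h1 h2]; apply/swap_I01; apply/P2; split.
    exact: (proj1 (swap_iso C C' psi) h1).
  exact: (proj1 (swap_sg psi) h2).
split; [exact: P1 | exact: Q2 | move=> phi [Hi [[h1 [_ h3]]|[h1 [_ h3]]]]].
  by left; apply/P1.
by right; apply/Q2.
Qed.
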